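(* Let $n=1$, $0<\alpha<1$, and on $\mathbb{R}$ let $d\sigma(y)=e^y\,dy$ and $d\omega(x)=\mathbf{1}_{[0,1]}(x)\,dx$. Then $A_2^\alpha(\sigma,\omega)=\infty$, while there is a constant $C=C(\alpha)<\infty$ such that $$\int_I|I_\alpha(\mathbf{1}_I\sigma)|^2\,d\omega\le C\,|3I|_\sigma\quad\text{for every bounded interval } I\subset\mathbb{R},$$ i.e. $\mathfrak{T}_{I_\alpha}(3)(\sigma,\omega)<\infty$.
   Context: On $\mathbb{R}$, $I_\alpha(f\mu)(x)=\int|x-y|^{\alpha-1}f(y)\,d\mu(y)$. For an interval $I$, $3I$ is the concentric interval of three times the length, $|I|_\mu=\mu(I)$. $A_2^\alpha(\sigma,\omega)=\sup_I\frac{|I|_\sigma|I|_\omega}{|I|^{2(1-\alpha)}}$ over intervals $I$. $\mathfrak{T}_{I_\alpha}(3)(\sigma,\omega)$ is the best constant $C$ in $\int_I|I_\alpha(\mathbf{1}_I\sigma)|^2d\omega\le C^2|3I|_\sigma$ over all intervals $I$. *)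

(* Defs.v *)
From Stdlib Require Import Reals Lra ClassicalEpsilon.
Open Scope R_scope.

(* Integral of a nonnegative function over [a,b] (a <= b), defined as the
   lower (Darboux) integral: the supremum of the integrals of step functions
   lying below f on [a,b].  For nonnegative functions that are continuous
   except at finitely many points (possibly with integrable singularities)
   this coincides with the Lebesgue integral. *)
Definition lower_sums (f : R -> R) (a b : R) : R -> Prop :=
  fun r => exists phi : StepFun a b,
    (forall t, a <= t <= b -> phi t <= f t) /\ r = RiemannInt_SF phi.

Definition int_finite (f : R -> R) (a b : R) : Prop :=
  bound (lower_sums f a b).

(* Value of the integral (meaningful when int_finite holds; 0 otherwise). *)
Definition nnint (f : R -> R) (a b : R) : R :=
  match excluded_middle_informative
          (bound (lower_sums f a b) /\ exists x, lower_sums f a b x) with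
  | left H => proj1_sig (completeness _ (proj1 H) (proj2 H))
  | right _ => 0
  end.

Definition sigma_dens (y : R) : R := exp y.
Definition omega_dens (x : R) : R :=
  if Rle_dec 0 x then (if Rle_dec x 1 then 1 else 0) else 0.

Definition sigma_meas (a b : R) : R := nnint sigma_dens a b.
Definition omega_meas (a b : R) : R := nnint omega_dens a b.

Definition frac_kernel (alpha x y : R) : R :=
  Rpower (Rabs (x - y)) (alpha - 1) * sigma_dens y.

Definition I_alpha_sigma (alpha a b x : R) : R :=
  nnint (frac_kernel alpha x) a b.

Definition A2_quot (alpha a b : R) : R :=
  sigma_meas a b * omega_meas a b / Rpower (b - a) (2 * (1 - alpha)).

Definition testing_integrand (alpha a b : R) (x : R) : R :=
  (I_alpha_sigma alpha a b x) ^ 2 * omega_dens x.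

(* Main.v *)
Require Import Defs.
From Stdlib Require Import Reals Lra Lia ClassicalEpsilon List RList RiemannInt_SF Ranalysis1 MVT.
Import ListNotations.
Open Scope R_scope.


Definition Piece (g H : R -> R) (c d : R) : Prop :=
  forall v, (forall t, c < t < d -> v <= g t) -> v * (d - c) <= H d - H c.

Lemma piece_split g H c m d : c <= m <= d -> Piece g H c m -> Piece g H m d -> Piece g H c d.
Proof.
  intros Hm P1 P2 v Hv.
  assert (A1 := P1 v (fun t Ht => Hv t ltac:(lra))).
  assert (A2 := P2 v (fun t Ht => Hv t ltac:(lra))).
  lra.
Qed.

Lemma Int_SF_bound (f g H : R -> R) (a b : R) :
  (forall c d, a <= c -> c < d -> d <= b -> Piece g H c d) ->
  (forall t, a <= t <= b -> f t <= g t) ->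
  forall l lf, ordered_Rlist l -> length l = S (length lf) ->
  (forall i, (i < pred (length l))%nat ->
     constant_D_eq f (open_interval (pos_Rl l i) (pos_Rl l (S i))) (pos_Rl lf i)) ->
  a <= pos_Rl l 0 -> pos_Rl l (pred (length l)) <= b ->
  Int_SF lf l <= H (pos_Rl l (pred (length l))) - H (pos_Rl l 0).
Proof.
  intros HP Hfg l; induction l as [|p l IH]; intros lf Ho Hlen Hc Ha Hb.
  - simpl in Hlen; discriminate.
  - destruct l as [|q l1].
    + destruct lf; simpl; lra.
    + destruct lf as [|v lf']; [simpl in Hlen; discriminate|].
      change (Int_SF (v :: lf') (p :: q :: l1)) with (v * (q - p) + Int_SF lf' (q :: l1)).
      assert (Hpq : p <= q) by (apply (Ho 0%nat); simpl; lia).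
      assert (Hql : q <= pos_Rl (q :: l1) (pred (length (q :: l1)))).
      { apply RList_P7; [apply (RList_P4 _ _ Ho)| simpl; auto]. }
      change (pos_Rl (p :: q :: l1) (pred (length (p :: q :: l1))))
        with (pos_Rl (q :: l1) (pred (length (q :: l1)))) in *.
      simpl in Ha.
      assert (IH' := IH lf' (RList_P4 _ _ Ho) ltac:(simpl in Hlen; simpl; lia)
        (fun i Hi => Hc (S i) ltac:(simpl in Hi |- *; lia)) ltac:(simpl; lra) Hb).
      simpl pos_Rl at 2 in IH'.
      assert (v * (q - p) <= H q - H p).
      { destruct (Req_dec p q) as [E|E].
        - subst; lra.
        - apply HP; try lra. intros t Ht.
          assert (Hv := Hc 0%nat ltac:(simpl; lia) t Ht). simpl in Hv.
          rewrite <- Hv. apply Hfg. lra. }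
      change (pos_Rl (p :: q :: l1) 0) with p. lra.
Qed.

Lemma lower_sum_bound (f g H : R -> R) (a b : R) : a <= b ->
  (forall c d, a <= c -> c < d -> d <= b -> Piece g H c d) ->
  (forall t, a <= t <= b -> f t <= g t) ->
  forall r, lower_sums f a b r -> r <= H b - H a.
Proof.
  intros Hab HP Hfg r [phi [Hphi ->]].
  unfold RiemannInt_SF. destruct (Rle_dec a b) as [_|n]; [|lra].
  destruct (StepFun_P1 phi) as (Ho & H0 & H1 & H2 & H3).
  rewrite Rmin_left in H0 by lra. rewrite Rmax_right in H1 by lra.
  assert (X := Int_SF_bound phi g H a b HP
     (fun t Ht => Rle_trans _ _ _ (Hphi t Ht) (Hfg t Ht)) _ _ Ho H2 H3
     ltac:(rewrite H0; lra) ltac:(rewrite H1; lra)).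
  rewrite H0, H1 in X. exact X.
Qed.

Lemma nnint_le f a b B : 0 <= B -> (forall r, lower_sums f a b r -> r <= B) -> nnint f a b <= B.
Proof.
  intros HB Hr. unfold nnint.
  destruct excluded_middle_informative as [Hx|Hx]; [|lra].
  destruct (completeness _ _ _) as [m [Hm1 Hm2]]; simpl.
  apply Hm2. intros r Hr'. apply Hr; auto.
Qed.

Lemma int_finite_of f a b B : (forall r, lower_sums f a b r -> r <= B) -> int_finite f a b.
Proof. intros Hr. exists B. intros r Hr'. apply Hr; auto. Qed.

Lemma nnint_ge f a b r : int_finite f a b -> lower_sums f a b r -> r <= nnint f a b.
Proof.
  intros Hf Hr. unfold nnint.
  destruct excluded_middle_informative as [Hx|Hx].
  - destruct (completeness _ _ _) as [m [Hm1 Hm2]]; simpl. apply Hm1; auto.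
  - exfalso; apply Hx; split; [exact Hf| exists r; exact Hr].
Qed.

Lemma zero_lower f a b : a <= b -> (forall t, a <= t <= b -> 0 <= f t) -> lower_sums f a b 0.
Proof.
  intros Hab Hf. exists (mkStepFun (StepFun_P4 a b 0)). split.
  - intros t Ht. simpl. unfold fct_cte. apply Hf; auto.
  - rewrite StepFun_P18. ring.
Qed.

Lemma nnint_ge0 f a b : a <= b -> (forall t, a <= t <= b -> 0 <= f t) -> 0 <= nnint f a b.
Proof.
  intros Hab Hf. unfold nnint.
  destruct excluded_middle_informative as [Hx|Hx]; [|lra].
  destruct (completeness _ _ _) as [m [Hm1 Hm2]]; simpl. apply Hm1. apply zero_lower; auto.
Qed.

Definition step2 (q v1 v2 : R) (t : R) : R := if Rle_dec t q then v1 else v2.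

Lemma step2_adapted p q r v1 v2 : p <= q <= r ->
  adapted_couple (step2 q v1 v2) p r (p :: q :: r :: nil) (v1 :: v2 :: nil).
Proof.
  intros Hq. repeat split.
  - intros i Hi. simpl in Hi. destruct i as [|[|i]]; simpl; lra || lia.
  - simpl. rewrite Rmin_left; lra.
  - simpl. rewrite Rmax_right; lra.
  - intros i Hi t Ht. simpl in Hi. unfold open_interval in Ht. unfold step2.
    destruct i as [|[|i]]; simpl in Ht |- *.
    + destruct (Rle_dec t q); lra.
    + destruct (Rle_dec t q); lra.
    + lia.
Qed.

Definition step2_SF p q r v1 v2 (Hq : p <= q <= r) : StepFun p r :=
  mkStepFun (existT _ (p :: q :: r :: nil) (existT _ (v1 :: v2 :: nil) (step2_adapted p q r v1 v2 Hq))).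

Lemma step2_int p q r v1 v2 Hq : RiemannInt_SF (step2_SF p q r v1 v2 Hq) = v1 * (q - p) + v2 * (r - q).
Proof.
  unfold RiemannInt_SF. destruct (Rle_dec p r); [|lra]. simpl. ring.
Qed.


Lemma exp_le x y : x <= y -> exp x <= exp y.
Proof. intros [H|H]; [left; apply exp_increasing; auto| subst; lra]. Qed.

Lemma ln_le' x y : 0 < x -> x <= y -> ln x <= ln y.
Proof. intros Hx [H|H]; [left; apply ln_increasing; auto| subst; lra]. Qed.

Lemma rp_pos t e : 0 < Rpower t e.
Proof. unfold Rpower; apply exp_pos. Qed.

Lemma rp_neg_le s t e : e <= 0 -> 0 < s <= t -> Rpower t e <= Rpower s e.
Proof.
  intros He Hst. unfold Rpower. apply exp_le.
  assert (ln s <= ln t) by (apply ln_le'; lra). nra.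
Qed.

Lemma rp_le1 t e : e <= 0 -> 1 <= t -> Rpower t e <= 1.
Proof.
  intros He Ht. unfold Rpower. rewrite <- exp_0. apply exp_le.
  assert (ln 1 <= ln t) by (apply ln_le'; lra). rewrite ln_1 in H. nra.
Qed.

Lemma piece_mono_g g1 g2 H c d : (forall t, c < t < d -> g1 t <= g2 t) -> Piece g2 H c d -> Piece g1 H c d.
Proof. intros Hg P v Hv. apply P. intros t Ht. eapply Rle_trans; [apply Hv; auto| apply Hg; auto]. lra. Qed.

Lemma piece_mono_H g H1 H2 c d : H1 d - H1 c <= H2 d - H2 c -> Piece g H1 c d -> Piece g H2 c d.
Proof. intros HH P v Hv. specialize (P v Hv). lra. Qed.

Lemma piece_const B c d : c < d -> Piece (fun _ => B) (fun y => B * y) c d.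
Proof.
  intros Hcd v Hv. assert (v <= B) by (apply (Hv ((c+d)/2)); lra). nra.
Qed.

Lemma piece_exp c d : c < d -> Piece exp exp c d.
Proof.
  intros Hcd v Hv.
  assert (Hvc : v <= exp c).
  { destruct (Rle_dec v (exp c)) as [h|h]; auto. exfalso.
    assert (Hv0 : 0 < v) by (generalize (exp_pos c); lra).
    assert (Hl : c < ln v).
    { apply exp_lt_inv. rewrite exp_ln; lra. }
    set (t := Rmin ((c + d)/2) ((c + ln v)/2)).
    assert (Ht1 : c < t) by (unfold t; apply Rmin_glb_lt; lra).
    assert (Ht2 : t < d) by (unfold t; eapply Rle_lt_trans; [apply Rmin_l| lra]).
    assert (Ht3 : t < ln v) by (unfold t; eapply Rle_lt_trans; [apply Rmin_r| lra]).
    assert (exp t < v) by (rewrite <- (exp_ln v) by lra; apply exp_increasing; auto).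
    specialize (Hv t ltac:(lra)). lra. }
  assert (exp d = exp c * exp (d - c)) by (rewrite <- exp_plus; f_equal; ring).
  assert (1 + (d - c) <= exp (d - c)) by apply exp_ineq1_le.
  generalize (exp_pos c); nra.
Qed.


Definition Pw (al t : R) : R := if Rlt_dec 0 t then Rpower t al else 0.
Definition Gk (al x y : R) : R := Pw al (y - x) - Pw al (x - y).

Lemma Pw_nonpos al t : t <= 0 -> Pw al t = 0.
Proof. intros; unfold Pw; destruct Rlt_dec; lra. Qed.
Lemma Pw_pos al t : 0 < t -> Pw al t = Rpower t al.
Proof. intros; unfold Pw; destruct Rlt_dec; lra. Qed.

Lemma Pw_mono al s t : 0 <= al -> s <= t -> Pw al s <= Pw al t.
Proof.
  intros Ha Hst. unfold Pw. destruct (Rlt_dec 0 s); destruct (Rlt_dec 0 t).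
  - apply Rle_Rpower_l; lra.
  - lra.
  - left; apply rp_pos.
  - lra.
Qed.

Lemma rp_mul u al : 0 < u -> u * Rpower u (al - 1) = Rpower u al.
Proof.
  intros Hu. rewrite <- (Rpower_1 u) at 1 by lra. rewrite <- Rpower_plus. f_equal; ring.
Qed.

Lemma tangent al u w : 0 < al < 1 -> 0 <= w < u ->
  al * (u - w) * Rpower u (al - 1) <= Pw al u - Pw al w.
Proof.
  intros Ha Hw. rewrite (Pw_pos al u) by lra.
  destruct (Req_dec w 0) as [E|E].
  - subst. rewrite Pw_nonpos by lra. rewrite Rminus_0_r, Rmult_assoc, rp_mul by lra.
    generalize (rp_pos u al); nra.
  - rewrite (Pw_pos al w) by lra.
    destruct (MVT_cor2 (fun t => Rpower t al) (fun t => al * Rpower t (al - 1)) w u)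
      as [c [Hc1 Hc2]]; [lra| |].
    + intros c Hc. apply derivable_pt_lim_power. lra.
    + rewrite Hc1. assert (Rpower u (al - 1) <= Rpower c (al - 1)) by (apply rp_neg_le; lra).
      assert (0 <= al * (u - w) * (Rpower c (al - 1) - Rpower u (al - 1))) by (apply Rmult_le_pos; nra).
      nra.
Qed.

Lemma rp_half s al : 0 < al < 1 -> 0 < s -> Rpower (s / 2) (al - 1) <= 2 * Rpower s (al - 1).
Proof.
  intros Ha Hs. unfold Rdiv. rewrite <- Rpower_mult_distr by lra.
  rewrite Rmult_comm. apply Rmult_le_compat_r; [left; apply rp_pos|].
  unfold Rpower. rewrite ln_Rinv by lra. rewrite <- (exp_ln 2) at 2 by lra.
  apply exp_le. assert (0 < ln 2) by (rewrite <- ln_1; apply ln_increasing; lra). nra.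
Qed.

Definition kern (al x t : R) : R := Rpower (Rabs (x - t)) (al - 1).

Lemma piece_kernel al x E c d : 0 < al < 1 -> 0 <= E -> c < d ->
  Piece (fun t => E * kern al x t) (fun y => 2 * E / al * Gk al x y) c d.
Proof.
  intros Ha HE Hcd.
  assert (left_case : forall c d, c < d -> d <= x ->
     Piece (fun t => E * kern al x t) (fun y => 2 * E / al * Gk al x y) c d).
  { clear c d Hcd. intros c d Hcd Hdx v Hv.
    specialize (Hv ((c + d) / 2) ltac:(lra)). unfold kern in Hv.
    rewrite Rabs_right in Hv by lra.
    assert (Rpower (x - (c + d) / 2) (al - 1) <= Rpower ((x - c) / 2) (al - 1))
      by (apply rp_neg_le; lra).
    assert (Hh := rp_half (x - c) al Ha ltac:(lra)).
    assert (Ht := tangent al (x - c) (x - d) Ha ltac:(lra)).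
    unfold Gk. rewrite !(Pw_nonpos al (_ - x)) by lra.
    assert (Hv2 : v <= 2 * E * Rpower (x - c) (al - 1)) by nra.
    assert (Hvd : v * (d - c) <= 2 * E * Rpower (x - c) (al - 1) * (d - c)) by nra.
    replace (x - c - (x - d)) with (d - c) in Ht by ring.
    apply Rle_trans with (1 := Hvd).
    replace (2 * E / al * (0 - Pw al (x - d)) - 2 * E / al * (0 - Pw al (x - c)))
      with (2 * E / al * (Pw al (x - c) - Pw al (x - d))) by ring.
    assert (H3 : (d - c) * Rpower (x - c) (al - 1) <= (Pw al (x - c) - Pw al (x - d)) / al).
    { apply Rle_trans with (al * (d - c) * Rpower (x - c) (al - 1) / al).
      - right; field; lra.
      - unfold Rdiv; apply Rmult_le_compat_r; [left; apply Rinv_0_lt_compat; lra | exact Ht]. }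
    replace (2 * E / al * (Pw al (x - c) - Pw al (x - d))) with (2 * E * ((Pw al (x - c) - Pw al (x - d)) / al)) by (field; lra).
    replace (2 * E * Rpower (x - c) (al - 1) * (d - c)) with (2 * E * ((d - c) * Rpower (x - c) (al - 1))) by ring.
    apply Rmult_le_compat_l; lra. }
  assert (right_case : forall c d, c < d -> x <= c ->
     Piece (fun t => E * kern al x t) (fun y => 2 * E / al * Gk al x y) c d).
  { clear c d Hcd. intros c d Hcd Hdx v Hv.
    specialize (Hv ((c + d) / 2) ltac:(lra)). unfold kern in Hv.
    rewrite Rabs_left1 in Hv by lra.
    assert (Rpower (- (x - (c + d) / 2)) (al - 1) <= Rpower ((d - x) / 2) (al - 1))
      by (apply rp_neg_le; lra).
    assert (Hh := rp_half (d - x) al Ha ltac:(lra)).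
    assert (Ht := tangent al (d - x) (c - x) Ha ltac:(lra)).
    unfold Gk. rewrite !(Pw_nonpos al (x - _)) by lra.
    assert (Hv2 : v <= 2 * E * Rpower (d - x) (al - 1)) by nra.
    assert (Hvd : v * (d - c) <= 2 * E * Rpower (d - x) (al - 1) * (d - c)) by nra.
    replace (d - x - (c - x)) with (d - c) in Ht by ring.
    apply Rle_trans with (1 := Hvd).
    replace (2 * E / al * (Pw al (d - x) - 0) - 2 * E / al * (Pw al (c - x) - 0))
      with (2 * E / al * (Pw al (d - x) - Pw al (c - x))) by ring.
    assert (H3 : (d - c) * Rpower (d - x) (al - 1) <= (Pw al (d - x) - Pw al (c - x)) / al).
    { apply Rle_trans with (al * (d - c) * Rpower (d - x) (al - 1) / al).
      - right; field; lra.
      - unfold Rdiv; apply Rmult_le_compat_r; [left; apply Rinv_0_lt_compat; lra | exact Ht]. }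
    replace (2 * E / al * (Pw al (d - x) - Pw al (c - x))) with (2 * E * ((Pw al (d - x) - Pw al (c - x)) / al)) by (field; lra).
    replace (2 * E * Rpower (d - x) (al - 1) * (d - c)) with (2 * E * ((d - c) * Rpower (d - x) (al - 1))) by ring.
    apply Rmult_le_compat_l; lra. }
  destruct (Rle_dec d x). { apply left_case; auto. }
  destruct (Rle_dec x c). { apply right_case; auto. }
  apply piece_split with x; [lra| apply left_case | apply right_case]; lra.
Qed.


Lemma const_lower_bound f a b B : a <= b -> (forall t, a <= t <= b -> f t <= B) ->
  forall r, lower_sums f a b r -> r <= B * b - B * a.
Proof.
  intros Hab Hf. apply (lower_sum_bound f (fun _ => B) (fun y => B * y)); auto.
  intros c d _ Hcd _. apply piece_const; auto.
Qed.

Lemma exp_int_finite a b : a <= b -> int_finite sigma_dens a b.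
Proof.
  intros Hab. apply int_finite_of with (exp b * b - exp b * a).
  apply const_lower_bound; auto. intros t Ht; unfold sigma_dens; apply exp_le; lra.
Qed.

Lemma sigma_step_lower p q r (Hq : p <= q <= r) : exp q * (r - q) <= sigma_meas p r.
Proof.
  unfold sigma_meas. apply nnint_ge; [apply exp_int_finite; lra|].
  exists (step2_SF p q r 0 (exp q) Hq). split.
  - intros t Ht. simpl. unfold step2, sigma_dens. destruct (Rle_dec t q).
    + left; apply exp_pos.
    + apply exp_le; lra.
  - rewrite step2_int. ring.
Qed.

Lemma omega_lower b : 1 <= b -> 1 <= omega_meas 0 b.
Proof.
  intros Hb. unfold omega_meas. apply nnint_ge.
  - apply int_finite_of with (1 * b - 1 * 0). apply const_lower_bound; [lra|].
    intros t Ht; unfold omega_dens. destruct (Rle_dec 0 t); [destruct (Rle_dec t 1)|]; lra.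
  - assert (Hq : 0 <= 1 <= b) by lra.
    exists (step2_SF 0 1 b 1 0 Hq). split.
    + intros t Ht. simpl. unfold step2, omega_dens.
      destruct (Rle_dec t 1); destruct (Rle_dec 0 t); try destruct (Rle_dec t 1); lra.
    + rewrite step2_int. ring.
Qed.

Lemma part1 al : 0 < al < 1 -> forall M : R, exists a b : R, a < b /\ M < A2_quot al a b.
Proof.
  intros Ha M. set (b := 27 * Rabs M + 27).
  assert (HM : 0 <= Rabs M) by apply Rabs_pos.
  assert (Hb : 27 <= b) by (unfold b; lra).
  exists 0, b. split; [lra|].
  assert (Hs := sigma_step_lower 0 (b - 1) b ltac:(lra)).
  assert (Ho := omega_lower b ltac:(lra)).
  replace (b - (b - 1)) with 1 in Hs by ring.
  set (Rp := Rpower (b - 0) (2 * (1 - al))).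
  assert (HR0 : 0 < Rp) by apply rp_pos.
  assert (HR : Rp <= b ^ 2).
  { unfold Rp. replace (b - 0) with b by ring.
    rewrite <- Rpower_pow by lra. replace (INR 2) with 2 by (simpl; ring).
    apply Rle_Rpower; lra. }
  assert (Hexp : b ^ 3 / 27 < exp (b - 1)).
  { set (y := (b - 1) / 3).
    assert (E : exp (b - 1) = exp y * exp y * exp y) by (rewrite <- !exp_plus; f_equal; unfold y; field).
    assert (1 + y < exp y) by (apply exp_ineq1; unfold y; lra).
    assert (0 < 1 + y) by (unfold y; lra).
    assert ((1 + y) * (1 + y) * (1 + y) < exp y * exp y * exp y).
    { apply Rmult_le_0_lt_compat; try nra. }
    unfold y in *. nra. }
  assert (Hsw : exp (b - 1) <= sigma_meas 0 b * omega_meas 0 b).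
  { generalize (exp_pos (b - 1)). nra. }
  assert (M * Rp < sigma_meas 0 b * omega_meas 0 b).
  { assert (M * Rp <= Rabs M * Rp) by (apply Rmult_le_compat_r; [lra| apply Rle_abs]).
    assert (Rabs M * Rp <= Rabs M * b ^ 2) by (apply Rmult_le_compat_l; lra).
    assert (Rabs M * b ^ 2 < b ^ 3 / 27).
    { replace (b ^ 3 / 27) with (b ^ 2 * (b / 27)) by (simpl; field).
      assert (Rabs M < b / 27) by (unfold b; lra). nra. }
    lra. }
  unfold A2_quot. fold Rp.
  apply (Rmult_lt_reg_r Rp); auto. unfold Rdiv. rewrite Rmult_assoc, Rinv_l by lra. lra.
Qed.


Definition clamp (lo hi y : R) : R := Rmax lo (Rmin y hi).

Lemma clamp_mono lo hi y1 y2 : y1 <= y2 -> clamp lo hi y1 <= clamp lo hi y2.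
Proof. intros; unfold clamp, Rmax, Rmin; repeat destruct Rle_dec; lra. Qed.
Lemma clamp_in lo hi y : lo <= y <= hi -> clamp lo hi y = y.
Proof. intros; unfold clamp, Rmax, Rmin; repeat destruct Rle_dec; lra. Qed.
Lemma clamp_lo lo hi y : lo <= hi -> y <= lo -> clamp lo hi y = lo.
Proof. intros; unfold clamp, Rmax, Rmin; repeat destruct Rle_dec; lra. Qed.
Lemma clamp_hi lo hi y : lo <= hi -> hi <= y -> clamp lo hi y = hi.
Proof. intros; unfold clamp, Rmax, Rmin; repeat destruct Rle_dec; lra. Qed.
Lemma clamp_bounds lo hi y : lo <= hi -> lo <= clamp lo hi y <= hi.
Proof. intros; unfold clamp, Rmax, Rmin; repeat destruct Rle_dec; lra. Qed.
Lemma clamp_lip lo hi a b : a <= b -> clamp lo hi b - clamp lo hi a <= b - a.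
Proof. intros; unfold clamp, Rmax, Rmin; repeat destruct Rle_dec; lra. Qed.

Lemma Gk_mono al x y1 y2 : 0 <= al -> y1 <= y2 -> Gk al x y1 <= Gk al x y2.
Proof.
  intros Ha H. unfold Gk.
  assert (Pw al (y1 - x) <= Pw al (y2 - x)) by (apply Pw_mono; lra).
  assert (Pw al (x - y2) <= Pw al (x - y1)) by (apply Pw_mono; lra).
  lra.
Qed.

Lemma Pw_le_t al t : 0 < al < 1 -> 1 <= t -> Pw al t <= t.
Proof.
  intros Ha Ht. rewrite Pw_pos by lra. rewrite <- (Rpower_1 t) at 2 by lra.
  apply Rle_Rpower; lra.
Qed.

Lemma Pw_ge0 al t : 0 <= Pw al t.
Proof. unfold Pw; destruct Rlt_dec; [left; apply rp_pos| lra]. Qed.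

Definition Hf (al x y : R) : R := 2 * exp 2 / al * Gk al x (clamp (-1) 2 y) + exp y.

Lemma kern_le1 al x t : 0 < al < 1 -> 1 <= Rabs (x - t) -> kern al x t <= 1.
Proof. intros. unfold kern. apply rp_le1; lra. Qed.

Lemma frac_far al x c d : 0 < al < 1 -> c < d ->
  (forall t, c < t < d -> 1 <= Rabs (x - t)) ->
  clamp (-1) 2 c = clamp (-1) 2 d -> Piece (frac_kernel al x) (Hf al x) c d.
Proof.
  intros Ha Hcd Hfar Hcl.
  apply piece_mono_g with exp.
  - intros t Ht. unfold frac_kernel, sigma_dens.
    assert (kern al x t <= 1) by (apply kern_le1; auto).
    unfold kern in H. generalize (exp_pos t); nra.
  - apply piece_mono_H with exp; [unfold Hf; rewrite Hcl; lra| apply piece_exp; auto].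
Qed.

Lemma frac_piece_all al x c d : 0 < al < 1 -> 0 <= x <= 1 -> c < d ->
  Piece (frac_kernel al x) (Hf al x) c d.
Proof.
  intros Ha Hx Hcd.
  assert (mid : forall c d, -1 <= c -> c < d -> d <= 2 -> Piece (frac_kernel al x) (Hf al x) c d).
  { clear c d Hcd. intros c d Hc Hcd Hd.
    apply piece_mono_g with (fun t => exp 2 * kern al x t).
    - intros t Ht. unfold frac_kernel, sigma_dens, kern.
      assert (exp t <= exp 2) by (apply exp_le; lra).
      generalize (rp_pos (Rabs (x - t)) (al - 1)); nra.
    - apply piece_mono_H with (fun y => 2 * exp 2 / al * Gk al x y).
      + unfold Hf. rewrite !clamp_in by lra. assert (exp c <= exp d) by (apply exp_le; lra). lra.
      + apply piece_kernel; auto. left; apply exp_pos. }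
  assert (upper : forall c d, -1 <= c -> c < d -> Piece (frac_kernel al x) (Hf al x) c d).
  { clear c d Hcd. intros c d Hc Hcd.
    destruct (Rle_dec d 2). { apply mid; lra. }
    destruct (Rle_dec 2 c).
    { apply frac_far; auto.
      - intros t Ht. rewrite Rabs_left1 by lra. lra.
      - rewrite !clamp_hi by lra. auto. }
    apply piece_split with 2; [lra| apply mid; lra|].
    apply frac_far; [auto|lra| |].
    - intros t Ht. rewrite Rabs_left1 by lra. lra.
    - rewrite !clamp_hi by lra. auto. }
  destruct (Rle_dec (-1) c). { apply upper; lra. }
  assert (lowp : forall d, d <= -1 -> c < d -> Piece (frac_kernel al x) (Hf al x) c d).
  { intros d' Hd' Hcd'. apply frac_far; auto.
    - intros t Ht. rewrite Rabs_right by lra. lra.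
    - rewrite !clamp_lo by lra. auto. }
  destruct (Rle_dec d (-1)). { apply lowp; lra. }
  apply piece_split with (-1); [lra| apply lowp; lra| apply upper; lra].
Qed.

Lemma frac_ge0 al x t : 0 <= frac_kernel al x t.
Proof. unfold frac_kernel, sigma_dens. generalize (rp_pos (Rabs (x - t)) (al - 1)) (exp_pos t); nra. Qed.

Lemma I_ge0 al a b x : a <= b -> 0 <= I_alpha_sigma al a b x.
Proof. intros. unfold I_alpha_sigma. apply nnint_ge0; auto. intros; apply frac_ge0. Qed.

Lemma I_bound al a b x : 0 < al < 1 -> a <= b -> 0 <= x <= 1 ->
  I_alpha_sigma al a b x <= 8 * exp 2 / al + exp b.
Proof.
  intros Ha Hab Hx. unfold I_alpha_sigma.
  assert (HK : 0 <= 2 * exp 2 / al) by (generalize (exp_pos 2); intros; unfold Rdiv; apply Rmult_le_pos; [lra| left; apply Rinv_0_lt_compat; lra]).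
  apply nnint_le.
  { generalize (exp_pos b) (exp_pos 2); intros. assert (0 < / al) by (apply Rinv_0_lt_compat; lra).
    unfold Rdiv; nra. }
  intros r Hr.
  assert (X := lower_sum_bound (frac_kernel al x) (frac_kernel al x) (Hf al x) a b Hab
      (fun c d _ Hcd _ => frac_piece_all al x c d Ha Hx Hcd) (fun t _ => Rle_refl _) r Hr).
  apply Rle_trans with (1 := X). unfold Hf.
  assert (G1 : Gk al x (clamp (-1) 2 b) <= Gk al x 2).
  { apply Gk_mono; [lra| apply clamp_bounds; lra]. }
  assert (G2 : Gk al x (-1) <= Gk al x (clamp (-1) 2 a)).
  { apply Gk_mono; [lra| apply clamp_bounds; lra]. }
  assert (G3 : Gk al x 2 - Gk al x (-1) <= 4).
  { unfold Gk. rewrite (Pw_nonpos al (x - 2)) by lra. rewrite (Pw_nonpos al (-1 - x)) by lra.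
    assert (Pw al (2 - x) <= 2 - x) by (apply Pw_le_t; lra).
    assert (Pw al (x - -1) <= x - -1) by (apply Pw_le_t; lra). lra. }
  assert (2 * exp 2 / al * (Gk al x (clamp (-1) 2 b) - Gk al x (clamp (-1) 2 a)) <= 2 * exp 2 / al * 4)
    by (apply Rmult_le_compat_l; lra).
  generalize (exp_pos a); intros.
  replace (8 * exp 2 / al) with (2 * exp 2 / al * 4) by (field; lra). lra.
Qed.


Lemma kern_finite al a b x : 0 < al < 1 -> a <= b -> int_finite (frac_kernel al x) a b.
Proof.
  intros Ha Hab.
  apply int_finite_of with ((fun y => 2 * exp b / al * Gk al x y) b - (fun y => 2 * exp b / al * Gk al x y) a).
  apply (lower_sum_bound _ (fun t => exp b * kern al x t) (fun y => 2 * exp b / al * Gk al x y)); auto.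
  - intros c d _ Hcd _. apply piece_kernel; auto. left; apply exp_pos.
  - intros t Ht. unfold frac_kernel, sigma_dens, kern.
    assert (exp t <= exp b) by (apply exp_le; lra).
    generalize (rp_pos (Rabs (x - t)) (al - 1)); nra.
Qed.

Lemma test_bound al a b : 0 < al < 1 -> a < b ->
  forall r, lower_sums (testing_integrand al a b) a b r ->
  r <= (8 * exp 2 / al + exp b) ^ 2 * clamp 0 1 b - (8 * exp 2 / al + exp b) ^ 2 * clamp 0 1 a.
Proof.
  intros Ha Hab. set (B := (8 * exp 2 / al + exp b) ^ 2).
  apply (lower_sum_bound _ (fun t => B * omega_dens t) (fun y => B * clamp 0 1 y)); [lra| |].
  - assert (zero : forall c d, c < d -> (forall t, c < t < d -> omega_dens t = 0) ->
        clamp 0 1 c = clamp 0 1 d -> Piece (fun t => B * omega_dens t) (fun y => B * clamp 0 1 y) c d).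
    { intros c d Hcd Hz Hcl v Hv. specialize (Hv ((c + d) / 2) ltac:(lra)).
      rewrite Hz in Hv by lra. rewrite Hcl. nra. }
    assert (mid : forall c d, 0 <= c -> c < d -> d <= 1 ->
        Piece (fun t => B * omega_dens t) (fun y => B * clamp 0 1 y) c d).
    { intros c d Hc Hcd Hd. apply piece_mono_g with (fun _ => B).
      - intros t Ht. unfold omega_dens. destruct (Rle_dec 0 t); [destruct (Rle_dec t 1)|]; lra.
      - apply piece_mono_H with (fun y => B * y); [rewrite !clamp_in by lra; lra| apply piece_const; auto]. }
    assert (lowz : forall t, t < 0 -> omega_dens t = 0).
    { intros t Ht; unfold omega_dens; destruct (Rle_dec 0 t); lra. }
    assert (highz : forall t, 1 < t -> omega_dens t = 0).
    { intros t Ht; unfold omega_dens; destruct (Rle_dec 0 t); [destruct (Rle_dec t 1)|]; lra. }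
    assert (upper : forall c d, 0 <= c -> c < d ->
        Piece (fun t => B * omega_dens t) (fun y => B * clamp 0 1 y) c d).
    { intros c d Hc Hcd. destruct (Rle_dec d 1). { apply mid; lra. }
      destruct (Rle_dec 1 c).
      { apply zero; auto. intros; apply highz; lra. rewrite !clamp_hi by lra; auto. }
      apply piece_split with 1; [lra| apply mid; lra| apply zero; [lra| intros; apply highz; lra| rewrite !clamp_hi by lra; auto]]. }
    intros c d _ Hcd _.
    destruct (Rle_dec 0 c). { apply upper; lra. }
    destruct (Rle_dec d 0).
    { apply zero; auto. intros; apply lowz; lra. rewrite !clamp_lo by lra; auto. }
    apply piece_split with 0; [lra| apply zero; [lra| intros; apply lowz; lra| rewrite !clamp_lo by lra; auto]| apply upper; lra].
  - intros t Ht. unfold testing_integrand. unfold omega_dens.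
    destruct (Rle_dec 0 t); [destruct (Rle_dec t 1)|]; try lra.
    assert (H0 := I_ge0 al a b t ltac:(lra)).
    assert (H1 := I_bound al a b t Ha ltac:(lra) ltac:(lra)).
    unfold B. nra.
Qed.

Theorem mainTheorem5 (alpha : R) (Ha : 0 < alpha < 1) :
  (forall M : R, exists a b : R, a < b /\ M < A2_quot alpha a b) /\
  (exists C : R, forall a b : R, a < b ->
     (forall x : R, int_finite (frac_kernel alpha x) a b) /\
     int_finite (testing_integrand alpha a b) a b /\
     nnint (testing_integrand alpha a b) a b
       <= C * sigma_meas (a - (b - a)) (b + (b - a))).
Proof.
  split; [apply part1; auto|].
  set (K0 := 8 * exp 2 / alpha).
  assert (HK0 : 0 <= K0).
  { unfold K0. generalize (exp_pos 2); intros. assert (0 < / alpha) by (apply Rinv_0_lt_compat; lra).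
    unfold Rdiv; nra. }
  exists (2 * K0 ^ 2 + 2 * exp 2). intros a b Hab.
  assert (TB := test_bound alpha a b Ha Hab). fold K0 in TB.
  set (B := (K0 + exp b) ^ 2) in TB.
  split; [intros x; apply kern_finite; lra|].
  split; [eapply int_finite_of; exact TB|].
  assert (Hcl := clamp_mono 0 1 a b ltac:(lra)).
  assert (HB0 : 0 <= B) by (unfold B; apply pow2_ge_0).
  apply Rle_trans with (B * clamp 0 1 b - B * clamp 0 1 a).
  { apply nnint_le; [nra| exact TB]. }
  set (L := b - a).
  assert (Hs0 : 0 <= sigma_meas (a - L) (b + L)).
  { unfold sigma_meas. apply nnint_ge0; [unfold L; lra| intros; left; apply exp_pos]. }
  assert (HC : 0 <= 2 * K0 ^ 2 + 2 * exp 2) by (generalize (exp_pos 2); nra).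
  destruct (Rle_dec (clamp 0 1 b - clamp 0 1 a) 0) as [Hz|Hz].
  { assert (Eq : clamp 0 1 b = clamp 0 1 a) by lra. rewrite Eq. ring_simplify. assert (0 <= (2 * K0 ^ 2 + 2 * exp 2) * sigma_meas (a - L) (b + L)) by (apply Rmult_le_pos; lra). unfold L in *. lra. }
  assert (Hb0 : 0 < b).
  { destruct (Rle_dec b 0) as [h|h]; [|lra]. rewrite !clamp_lo in Hz by lra. lra. }
  assert (Ha1 : a < 1).
  { destruct (Rle_dec 1 a); [|lra]. rewrite !clamp_hi in Hz by lra. lra. }
  set (dl := Rmin L 1).
  assert (Hdl : 0 < dl <= 1 /\ dl <= L) by (unfold dl, L, Rmin; destruct Rle_dec; lra).
  set (q := b + L - dl).
  assert (Hsig := sigma_step_lower (a - L) q (b + L) ltac:(unfold q, L in *; lra)).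
  replace (b + L - q) with dl in Hsig by (unfold q; ring).
  assert (Hd : clamp 0 1 b - clamp 0 1 a <= dl).
  { assert (clamp 0 1 b - clamp 0 1 a <= b - a) by (apply clamp_lip; lra).
    assert (Hb1 := clamp_bounds 0 1 b ltac:(lra)). assert (Ha2 := clamp_bounds 0 1 a ltac:(lra)).
    unfold dl, Rmin, L in *; destruct Rle_dec; lra. }
  assert (Hq1 : 1 <= exp q).
  { rewrite <- exp_0. apply exp_le. unfold q; lra. }
  assert (He2 : exp b ^ 2 <= exp 2 * exp q).
  { replace (exp b ^ 2) with (exp (b + b)) by (rewrite exp_plus; ring).
    rewrite <- exp_plus. apply exp_le. unfold q, L in *. lra. }
  assert (HB : B <= 2 * K0 ^ 2 + 2 * exp 2 * exp q).
  { unfold B. assert (0 <= (K0 - exp b) ^ 2) by apply pow2_ge_0. nra. }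
  assert (B * clamp 0 1 b - B * clamp 0 1 a <= (2 * K0 ^ 2 + 2 * exp 2) * (exp q * dl)).
  { apply Rle_trans with (B * dl).
    { replace (B * clamp 0 1 b - B * clamp 0 1 a) with (B * (clamp 0 1 b - clamp 0 1 a)) by ring.
      apply Rmult_le_compat_l; lra. }
    assert (B <= (2 * K0 ^ 2 + 2 * exp 2) * exp q).
    { assert (K0 ^ 2 <= K0 ^ 2 * exp q) by (rewrite <- (Rmult_1_r (K0 ^ 2)) at 1; apply Rmult_le_compat_l; [apply pow2_ge_0|lra]). lra. }
    rewrite <- Rmult_assoc. apply Rmult_le_compat_r; lra. }
  assert ((2 * K0 ^ 2 + 2 * exp 2) * (exp q * dl) <= (2 * K0 ^ 2 + 2 * exp 2) * sigma_meas (a - L) (b + L)) by (apply Rmult_le_compat_l; lra).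
  unfold L in *. lra.
Qed.
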